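(* Every strict gammoid has weak canonical bases over closed sets. That is, if $\mathcal A=(A,\mathrm{cl})$ is a matroid with a presentation $(A;R)\in\mathcal C$, $B$ is a closed set of $\mathcal A$ and $\bar a$ is a finite tuple of elements of $A$, then there is a closed set $B_0\subseteq B$ such that for every closed set $B_1\subseteq B$: $d(\bar a/B_1)=d(\bar a/B)$ if and only if $B_0\subseteq B_1$.
   Context: A set system is a pair $(A;R)$ where $R$ is a set of finite non-empty subsets of $A$; for $X\subseteq A$, $R[X]=\{r\in R:r\subseteq X\}$ and $\delta(X)=|X|-|R[X]|$. $\mathcal C$ is the class of finite set systems with $\delta(X)\ge0$ for all $X\subseteq A$. For $(A;R)\in\mathcal C$, $d(X)=\min\{\delta(Y):X\subseteq Y\subseteq A\}$, $\mathrm{cl}(X)=\{y:d(X\cup\{y\})=d(X)\}$, and $PG(A;R)$ is the matroid $(A,\mathrm{cl})$ with rank function $d$; $(A;R)$ is a presentation of $\mathcal A$ if $PG(A;R)=\mathcal A$. Strict gammoids are exactly the matroids having such a presentation. A closed set is $F$ with $\mathrm{cl}(F)=F$. For a closed set $B$ and a finite tuple $\bar a$, $d(\bar a/B)=d(\bar aB)-d(B)$, where $\bar aB$ is the union of $B$ with the set of entries of $\bar a$. *)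

(* Defs.v *)
From HB Require Import structures.
From mathcomp Require Import all_boot all_order all_algebra.
Set Implicit Arguments. Unset Strict Implicit. Unset Printing Implicit Defensive.

Section SetSystems.
Variable A : finType.
Implicit Types (R : {set {set A}}) (X Y B : {set A}).

Definition Rsub R X : {set {set A}} := [set r in R | r \subset X].

Definition delta R X : int := (#|X|%:Z - #|Rsub R X|%:Z)%R.

Definition inC R : Prop :=
  (forall r, r \in R -> r != set0) /\ (forall X, (0 <= delta R X)%R).

(* delta as a natural number (agrees with delta on systems in C) *)
Definition deltaN R X : nat := #|X| - #|Rsub R X|.

Definition dmin R X : nat :=
  deltaN R [arg min_(Y < setT | X \subset Y) deltaN R Y].

Definition cl R X : {set A} := [set y | dmin R (y |: X) == dmin R X].

Definition is_closed R X : bool := cl R X == X.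

Definition drel R (a : seq A) B : int :=
  ((dmin R (B :|: [set x in a]))%:Z - (dmin R B)%:Z)%R.

End SetSystems.

(* Main.v *)
Require Import Defs.
From HB Require Import structures.
From mathcomp Require Import all_boot all_order all_algebra.
From mathcomp Require Import zify.
Import Order.TTheory GRing.Theory Num.Theory.

Section Proofs.
Variable A : finType.
Variable R : {set {set A}}.
Hypothesis hC : forall X : {set A}, #|Rsub R X| <= #|X|.

Local Notation D := (deltaN R).
Local Notation d := (dmin R).

Lemma submod (X Y : {set A}) :
  D (X :|: Y) + D (X :&: Y) + #|Rsub R (X :|: Y) :\: (Rsub R X :|: Rsub R Y)|
  = D X + D Y.
Proof.
have h1 := cardsUI X Y.
have hI : Rsub R (X :&: Y) = Rsub R X :&: Rsub R Y.
  by apply/setP=> r; rewrite !inE subsetI; case: (r \in R).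
have h2 := cardsUI (Rsub R X) (Rsub R Y).
have hs : Rsub R X :|: Rsub R Y \subset Rsub R (X :|: Y).
  apply/subsetP=> r; rewrite !inE => /orP[/andP[-> h]|/andP[-> h]] /=.
  - by apply: subset_trans h (subsetUl _ _).
  - by apply: subset_trans h (subsetUr _ _).
have h3 := cardsID (Rsub R X :|: Rsub R Y) (Rsub R (X :|: Y)).
move/setIidPr: hs => hs; rewrite hs in h3.
have := hC X; have := hC Y; have := hC (X :|: Y); have := hC (X :&: Y).
rewrite /deltaN hI; lia.
Qed.

Lemma dmin_le (X Y : {set A}) : X \subset Y -> d X <= D Y.
Proof.
move=> XY; rewrite /dmin.
by case: (@arg_minnP _ setT (fun Y : {set A} => X \subset Y) (fun Y => D Y) (subsetT X)) => Y0 _ /(_ Y XY).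
Qed.

Lemma dmin_ex (X : {set A}) : exists Y : {set A}, X \subset Y /\ D Y = d X.
Proof.
rewrite /dmin.
case: (@arg_minnP _ setT (fun Y : {set A} => X \subset Y) (fun Y => D Y) (subsetT X)) => Y0 h _.
by exists Y0.
Qed.

Lemma dmin_mono (X Y : {set A}) : X \subset Y -> d X <= d Y.
Proof.
move=> XY; have [Z [YZ <-]] := dmin_ex Y.
by apply: dmin_le; apply: subset_trans YZ.
Qed.

Lemma in_cl (X : {set A}) y : d (y |: X) <= d X -> y \in cl R X.
Proof.
move=> h; rewrite inE eqn_leq h /=; apply: dmin_mono; exact: subsetUr.
Qed.

Lemma closedE {X : {set A}} : is_closed R X -> cl R X = X.
Proof. by move/eqP. Qed.

Lemma closed_D {X : {set A}} : is_closed R X -> D X = d X.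
Proof.
move=> cX; have [Y [XY hY]] := dmin_ex X.
have YX : Y \subset X.
  apply/subsetP=> y yY; rewrite -(closedE cX); apply: in_cl.
  rewrite -hY; apply: dmin_le; by rewrite subUset sub1set yY XY.
have eXY : X = Y by apply/eqP; rewrite eqEsubset XY YX.
by move: hY; rewrite -eXY.
Qed.

Lemma lemL {X C Y : {set A}} : is_closed R X -> C \subset X -> C \subset Y -> D Y = d C ->
  Y \subset X.
Proof.
move=> cX CX CY hY; apply/subsetP=> y yY.
rewrite -(closedE cX); apply: in_cl.
have e := submod Y X.
have h1 : d C <= D (Y :&: X) by apply: dmin_le; rewrite subsetI CY CX.
have h2 : d (y |: X) <= D (Y :|: X).
  by apply: dmin_le; rewrite subUset sub1set inE yY subsetUr.
have h3 := closed_D cX.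
lia.
Qed.

Lemma closedI {X1 X2 : {set A}} : is_closed R X1 -> is_closed R X2 -> is_closed R (X1 :&: X2).
Proof.
move=> c1 c2; rewrite /is_closed eqEsubset; apply/andP; split.
  apply/subsetP=> y; rewrite inE => /eqP hy.
  have [Y [sY hY]] := dmin_ex (y |: (X1 :&: X2)).
  rewrite hy in hY.
  have CY : X1 :&: X2 \subset Y by apply: subset_trans sY; exact: subsetUr.
  have yY : y \in Y by apply: (subsetP sY); rewrite !inE eqxx.
  have /subsetP s1 := lemL c1 (subsetIl _ _) CY hY.
  have /subsetP s2 := lemL c2 (subsetIr _ _) CY hY.
  by rewrite inE s1 // s2.
apply/subsetP=> y yC; apply: in_cl.
by have -> : y |: (X1 :&: X2) = X1 :&: X2 by apply/setUidPr; rewrite sub1set.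
Qed.

Variable aS : {set A}.

Lemma mono_rel {B C : {set A}} : is_closed R B -> C \subset B ->
  d (B :|: aS) + d C <= d (C :|: aS) + d B.
Proof.
move=> cB CB; have [Y [sY hY]] := dmin_ex (C :|: aS).
have e := submod Y B.
have h1 : d C <= D (Y :&: B).
  by apply: dmin_le; rewrite subsetI CB andbT; exact: subset_trans (subsetUl C aS) sY.
have h2 : d (B :|: aS) <= D (Y :|: B).
  apply: dmin_le; rewrite subUset subsetUr /=.
  exact: subset_trans (subset_trans (subsetUr C aS) sY) (subsetUl Y B).
have h3 := closed_D cB.
lia.
Qed.

Lemma half {B B1 : {set A}} : is_closed R B -> is_closed R B1 -> B1 \subset B ->
  d (B1 :|: aS) + d B = d (B :|: aS) + d B1 ->
  exists Y : {set A}, [/\ B1 :|: aS \subset Y, D Y = d (B1 :|: aS), Y :&: B \subset B1,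
     D (Y :|: B) = d (B :|: aS) &
     Rsub R (Y :|: B) \subset Rsub R Y :|: Rsub R B].
Proof.
move=> cB c1 s1 eq1; have [Y [sY hY]] := dmin_ex (B1 :|: aS).
have e := submod Y B.
have B1Y : B1 \subset Y by apply: subset_trans sY; apply: subsetUl.
have aY : aS \subset Y by apply: subset_trans sY; apply: subsetUr.
have h1 : d B1 <= D (Y :&: B) by apply: dmin_le; rewrite subsetI B1Y s1.
have h2 : d (B :|: aS) <= D (Y :|: B).
  apply: dmin_le; rewrite subUset subsetUr /=.
  by apply: subset_trans (subsetUl _ _) .
have h3 := closed_D cB.
exists Y; split => //.
- apply: (lemL c1 (subxx _)); first by rewrite subsetI B1Y s1.
  lia.
- lia.
- rewrite -setD_eq0 -cards_eq0; apply/eqP; lia.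
Qed.

Lemma key {B B1 B2 : {set A}} : is_closed R B -> is_closed R B1 -> B1 \subset B ->
  is_closed R B2 -> B2 \subset B ->
  d (B1 :|: aS) + d B = d (B :|: aS) + d B1 ->
  d (B2 :|: aS) + d B = d (B :|: aS) + d B2 ->
  d ((B1 :&: B2) :|: aS) + d B <= d (B :|: aS) + d (B1 :&: B2).
Proof.
move=> cB c1 s1 c2 s2 e1 e2.
have [Y1 [sY1 hY1 i1 z1 r1]] := half cB c1 s1 e1.
have [Y2 [sY2 hY2 i2 z2 r2]] := half cB c2 s2 e2.
set W := Y1 :&: Y2.
have eZ := submod (Y1 :|: B) (Y2 :|: B).
have hZ : d (B :|: aS) <= D ((Y1 :|: B) :|: (Y2 :|: B)).
  have aY1 : aS \subset Y1 := subset_trans (subsetUr B1 aS) sY1.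
  apply: dmin_le; apply: (subset_trans _ (subsetUl (Y1:|:B) (Y2:|:B))).
  by rewrite subUset subsetUr (subset_trans aY1 (subsetUl _ _)).
have ZI : (Y1 :|: B) :&: (Y2 :|: B) = W :|: B.
  apply/setP=> x; rewrite !inE; by case: (x \in Y1); case: (x \in Y2); case: (x \in B).
rewrite ZI in eZ.
have eW := submod W B.
have hr : Rsub R (W :|: B) \subset Rsub R W :|: Rsub R B.
  apply/subsetP=> r rin.
  have rZ1 : r \in Rsub R (Y1 :|: B).
    move: rin; rewrite !inE => /andP[-> /subset_trans]; apply.
    by apply: setSU; apply: subsetIl.
  have rZ2 : r \in Rsub R (Y2 :|: B).
    move: rin; rewrite !inE => /andP[-> /subset_trans]; apply.
    by apply: setSU; apply: subsetIr.
  move: (subsetP r1 _ rZ1) (subsetP r2 _ rZ2); rewrite !inE.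
  case/orP=> /andP[-> h1]; case/orP=> /andP[_ h2]; rewrite ?h1 ?h2 ?orbT //=.
  by rewrite subsetI h1 h2.
have e0 : #|Rsub R (W :|: B) :\: (Rsub R W :|: Rsub R B)| = 0.
  by apply/eqP; rewrite cards_eq0 setD_eq0.
have WB : W :&: B = B1 :&: B2.
  apply/eqP; rewrite eqEsubset; apply/andP; split.
    rewrite subsetI; apply/andP; split.
      by apply: (subset_trans _ i1); rewrite setSI // subsetIl.
    by apply: (subset_trans _ i2); rewrite setSI // subsetIr.
  have B1Y1 : B1 \subset Y1 := subset_trans (subsetUl B1 aS) sY1.
  have B2Y2 : B2 \subset Y2 := subset_trans (subsetUl B2 aS) sY2.
  rewrite subsetI; apply/andP; split; last exact: subset_trans (subsetIl B1 B2) s1.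
  rewrite subsetI; apply/andP; split.
    exact: subset_trans (subsetIl B1 B2) B1Y1.
  exact: subset_trans (subsetIr B1 B2) B2Y2.
rewrite WB in eW.
have hW : d ((B1 :&: B2) :|: aS) <= D W.
  apply: dmin_le; rewrite subUset subsetI; apply/andP; split; first (apply/andP; split).
  - exact: subset_trans (subsetIl B1 B2) (subset_trans (subsetUl B1 aS) sY1).
  - exact: subset_trans (subsetIr B1 B2) (subset_trans (subsetUl B2 aS) sY2).
  - rewrite subsetI (subset_trans (subsetUr B1 aS) sY1).
    exact: (subset_trans (subsetUr B2 aS) sY2).
have hd := closed_D (closedI c1 c2).
have hdB := closed_D cB.
lia.
Qed.

End Proofs.

Theorem theorem6p1 (A : finType) (R : {set {set A}}) :
  inC R ->
  forall (B : {set A}), is_closed R B ->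
  forall (a : seq A),
  exists B0 : {set A},
    [/\ is_closed R B0, B0 \subset B &
      forall B1 : {set A}, is_closed R B1 -> B1 \subset B ->
        (drel R a B1 = drel R a B <-> B0 \subset B1)].
Proof.
move=> [_ hC0] B cB a.
have hC : forall X : {set A}, #|Rsub R X| <= #|X|.
  move=> X; have := hC0 X; rewrite /delta subr_ge0 lez_nat; done.
set aS := [set x in a].
have drelE X : drel R a X = drel R a B <->
   dmin R (X :|: aS) + dmin R B = dmin R (B :|: aS) + dmin R X.
  rewrite /drel -/aS; split=> h; lia.
pose F := [pred X : {set A} | [&& is_closed R X, X \subset B &
            dmin R (X :|: aS) + dmin R B == dmin R (B :|: aS) + dmin R X]].
have FB : F B by rewrite /F /= cB subxx eqxx.
case: (arg_minnP (fun X : {set A} => #|X|) FB) => B0 /and3P[c0 s0 /eqP e0] min0.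
exists B0; split=> // B1 c1 s1; rewrite drelE; split=> [e1|s01].
- have FI : F (B0 :&: B1).
    rewrite /F /= (closedI _ _ hC c0 c1) (subset_trans (subsetIl _ _) s0) /=.
    have k := key _ _ hC aS cB c0 s0 c1 s1 e0 e1.
    have m := mono_rel _ _ hC aS cB (subset_trans (subsetIl B0 B1) s0).
    apply/eqP; move: k m; clear -e0 e1; lia.
  have := min0 _ FI.
  move=> h; have /eqP <- : B0 :&: B1 == B0 by rewrite eqEcard subsetIl h.
  by rewrite subsetIr.
- have m1 := mono_rel _ _ hC aS c1 s01.
  have m2 := mono_rel _ _ hC aS cB s1.
  move: m1 m2 e0; clear; lia.
Qed.
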